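(* Let $S$ be the three-vertex tree with root $a$, whose right child is $b$, where $b$ has a left child $c$ (preorder $132$), with both edges contiguous. Let $(P,e)$ be any tree pattern. Let $Q$ and $Q'$ be obtained from $S$ by attaching $(P,e)$ via a non-contiguous edge as the right subtree of the leaf $c$, respectively as the right subtree of the middle vertex $b$. Then $Q$ and $Q'$ are Wilf-equivalent.
   Context: $\mathcal{T}_n$ is the set of binary trees on $n$ vertices labeled $1,\dots,n$ by the search tree property (labels of combined trees reassigned by this property). $c_L,c_R,p$: left child, right child, parent. A tree pattern is $(P,e)$, $P\in\mathcal{T}_k$, $e\colon[k]\setminus\{\text{root}\}\to\{0,1\}$; edge $(i,p(i))$ is contiguous if $e(i)=1$, non-contiguous if $e(i)=0$. $T\in\mathcal{T}_n$ contains $(P,e)$ if there is an injection $f\colon[k]\to[n]$ such that for every non-root $i$ of $P$: if $e(i)=1$, $f(i)$ is the left (resp. right) child of $f(p(i))$ when $i$ is the left (resp. right) child of $p(i)$; if $e(i)=0$, $f(i)$ lies in the left (resp. right) subtree of $f(p(i))$. $\mathcal{T}_n(Q)$ is the set of avoiders of $Q$. $Q,Q'$ are Wilf-equivalent if $|\mathcal{T}_n(Q)|=|\mathcal{T}_n(Q')|$ for all $n\ge0$. *)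

(* Defs.v *)
From mathcomp Require Import all_boot.
Set Implicit Arguments. Unset Strict Implicit. Unset Printing Implicit Defensive.

(* Unlabeled binary trees; the labels 1..n are determined by the
   binary-search-tree property (in-order), so a tree in T_n is just a shape. *)
Inductive btree : Type := Leaf | Node of btree & btree.

Fixpoint bsize (t : btree) : nat :=
  match t with Leaf => 0 | Node l r => (bsize l + bsize r).+1 end.

(* Vertices are addressed by their path from the root:
   false = go to the left child, true = go to the right child. *)
Fixpoint in_tree (t : btree) (u : seq bool) : bool :=
  match t, u with
  | Leaf, _ => false
  | Node _ _, [::] => true
  | Node l r, b :: u' => in_tree (if b then r else l) u'
  end.

(* A tree pattern (P, e): e u is the label of the edge from the non-root
   vertex at address u to its parent (true = contiguous, false = non-contiguous).
   Values of e at the root / non-vertices are irrelevant. *)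
Record pattern := Pattern { pat_tree : btree; pat_edge : seq bool -> bool }.

Definition contains (T : btree) (Q : pattern) : Prop :=
  exists f : seq bool -> seq bool,
    {in in_tree (pat_tree Q) &, injective f} /\
    (forall u, in_tree (pat_tree Q) u -> in_tree T (f u)) /\
    (forall u b, in_tree (pat_tree Q) (rcons u b) ->
       if pat_edge Q (rcons u b) then f (rcons u b) = rcons (f u) b
       else exists s, f (rcons u b) = f u ++ b :: s).

Definition avoiders (Q : pattern) (n : nat) : Type :=
  {T : btree | bsize T = n /\ ~ contains T Q}.

Definition wilf_equiv (Q Q' : pattern) : Prop :=
  forall n, exists f : avoiders Q n -> avoiders Q' n, bijective f.

(* S: root a, right child b, b has left child c; both edges contiguous.
   Q_leaf: (P,e) attached by a non-contiguous edge as right subtree of c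
   (address [:: true; false; true] for the root of P). *)
Definition attach_leaf (P : pattern) : pattern :=
  Pattern (Node Leaf (Node (Node Leaf (pat_tree P)) Leaf))
    (fun u => if take 3 u == [:: true; false; true]
              then (if size u == 3 then false else pat_edge P (drop 3 u))
              else true).

(* Q_mid: (P,e) attached by a non-contiguous edge as right subtree of b
   (address [:: true; true] for the root of P). *)
Definition attach_mid (P : pattern) : pattern :=
  Pattern (Node Leaf (Node (Node Leaf Leaf) (pat_tree P)))
    (fun u => if take 2 u == [:: true; true]
              then (if size u == 2 then false else pat_edge P (drop 2 u))
              else true).

(* Main.v *)
Require Import Defs.
From mathcomp Require Import all_boot.
From Stdlib Require Import ProofIrrelevance.

Lemma catI (T : Type) (s t1 t2 : seq T) : s ++ t1 = s ++ t2 -> t1 = t2.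
Proof. by elim: s => //= x s IH [] /IH. Qed.

Fixpoint sub (t : btree) (u : seq bool) : btree :=
  match u, t with
  | [::], _ => t
  | b :: u', Node l r => sub (if b then r else l) u'
  | _ :: _, Leaf => Leaf
  end.

Lemma in_tree_sub t x u : in_tree (sub t x) u = in_tree t (x ++ u).
Proof.
by elim: x t => [|b x IH] [|l r] //=.
Qed.

Lemma in_tree_prefix t u w : in_tree t (u ++ w) -> in_tree t u.
Proof.
elim: u t => [|b u IH] [|l r] //=; exact: IH.
Qed.

Arguments in_tree_prefix [t u w].

Lemma take_eq_size (a s : seq bool) : take (size a) s = a -> size a <= size s.
Proof.
move=> E; have := congr1 size E; rewrite size_take.
case: ltnP => [/ltnW // | _ E']; by rewrite E'.
Qed.

Arguments take_eq_size [a s].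

Lemma contains_graft (P Q : pattern) (K : btree) (a c : seq bool) (b : bool) T :
  a = rcons c b -> in_tree K c -> ~~ in_tree K a ->
  (forall u, in_tree (pat_tree Q) u =
     in_tree K u || (take (size a) u == a) && in_tree (pat_tree P) (drop (size a) u)) ->
  (forall u, pat_edge Q u = if take (size a) u == a then
      (if size u == size a then false else pat_edge P (drop (size a) u)) else true) ->
  contains T Q <-> exists x, (forall u, in_tree K u -> in_tree T (x ++ u)) /\
                            contains (sub T (x ++ a)) P.
Proof.
move=> ha hc hna hQ hE.
set k := size a.
have NK : forall u, in_tree K u -> take k u != a.
  move=> u hu; apply/negP => /eqP E; move: hna; rewrite -E.
  rewrite -(cat_take_drop k u) in hu; by rewrite (in_tree_prefix hu).
have pref : forall u, take k u = a -> u = a ++ drop k u.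
  by move=> u E; rewrite -{1}(cat_take_drop k u) E.
split.
- move=> [f [finj [fin fedge]]].
  set x := f [::].
  have C1 : forall u, in_tree K u -> f u = x ++ u.
    elim/last_ind => [|v b' IH] hK; first by rewrite cats0.
    have hv : in_tree K v by apply: (@in_tree_prefix _ _ [:: b']); rewrite cats1.
    have hq : in_tree (pat_tree Q) (rcons v b') by rewrite hQ hK.
    have := fedge v b' hq; rewrite hE (negbTE (NK _ hK)) => ->.
    by rewrite IH // rcons_cat.
  have hP0 : forall w, in_tree (pat_tree P) w -> in_tree (pat_tree P) [::].
    by move=> w hw; apply: (@in_tree_prefix _ _ w).
  have C2 : forall w, in_tree (pat_tree P) w -> exists s, f (a ++ w) = x ++ a ++ s.
    elim/last_ind => [|w b' IH] hw.
      have hq : in_tree (pat_tree Q) (rcons c b).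
        by rewrite hQ -ha take_size eqxx drop_size hw orbT.
      have := fedge c b hq; rewrite hE -ha take_size eqxx eqxx.
      move=> [s hs]; exists s; by rewrite cats0 hs C1 // ha -catA cat_rcons.
    have hw' : in_tree (pat_tree P) w by apply: (@in_tree_prefix _ _ [:: b']); rewrite cats1.
    have [s hs] := IH hw'.
    have hq : in_tree (pat_tree Q) (rcons (a ++ w) b').
      by rewrite hQ rcons_cat take_size_cat // drop_size_cat // eqxx hw orbT.
    have := fedge (a ++ w) b' hq.
    rewrite hE rcons_cat take_size_cat // drop_size_cat // eqxx.
    rewrite size_cat size_rcons -/k -[k in _ == k]addn0 eqn_add2l /=.
    case: (pat_edge P (rcons w b')).
      move=> ->; rewrite hs; exists (rcons s b'); by rewrite !rcons_cat.
    move=> [s' ->]; rewrite hs; exists (s ++ b' :: s'); by rewrite !catA.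
  set g := fun w => drop (size (x ++ a)) (f (a ++ w)).
  have hg : forall w, in_tree (pat_tree P) w -> f (a ++ w) = x ++ a ++ g w.
    move=> w hw; have [s hs] := C2 w hw.
    by rewrite /g hs catA drop_size_cat // catA.
  have hqa : forall w, in_tree (pat_tree P) w -> in_tree (pat_tree Q) (a ++ w).
    by move=> w hw; rewrite hQ take_size_cat // drop_size_cat // eqxx hw orbT.
  exists x; split.
    by move=> u hu; rewrite -C1 // fin // hQ hu.
  exists g; split; [|split].
  + move=> w1 w2 h1 h2 /= E.
    have : f (a ++ w1) = f (a ++ w2) by rewrite !hg // E.
    by move/finj => /(_ (hqa _ h1) (hqa _ h2)) /catI.
  + by move=> w hw; rewrite in_tree_sub -catA -hg // fin // hqa.
  + move=> w b' hw.
    have hw' : in_tree (pat_tree P) w by apply: (@in_tree_prefix _ _ [:: b']); rewrite cats1.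
    have := fedge (a ++ w) b'; rewrite rcons_cat => /(_ (hqa _ hw)).
    rewrite hE take_size_cat // drop_size_cat // eqxx.
    rewrite size_cat size_rcons -/k -[k in _ == k]addn0 eqn_add2l /=.
    rewrite !hg //.
    case: (pat_edge P (rcons w b')).
      by rewrite !rcons_cat => /catI /catI.
    by move=> [s]; rewrite -!catA => /catI /catI ->; exists s.
- move=> [x [hK [g [ginj [gin gedge]]]]].
  pose f u := if take k u == a then x ++ a ++ g (drop k u) else x ++ u.
  have F1 : forall u, in_tree (pat_tree Q) u -> take k u != a -> in_tree K u.
    by move=> u; rewrite hQ => /orP [// | /andP [->]].
  have F2 : forall u, in_tree (pat_tree Q) u -> take k u == a -> in_tree (pat_tree P) (drop k u).
    move=> u; rewrite hQ => /orP [hu E | /andP [_ //]].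
    by move: (NK _ hu); rewrite E.
  exists f; split; [|split].
  + move=> u1 u2 h1 h2; rewrite /f.
    case E1: (take k u1 == a); case E2: (take k u2 == a).
    * move/catI/catI/ginj => E.
      have {}E := E (F2 _ h1 E1) (F2 _ h2 E2).
      by rewrite (pref u1 (eqP E1)) (pref u2 (eqP E2)) E.
    * move/catI => E; move: E2; by rewrite -E take_size_cat // eqxx.
    * move/catI => E; move: E1; by rewrite E take_size_cat // eqxx.
    * by move/catI.
  + move=> u hu; rewrite /f; case E: (take k u == a).
      by rewrite catA -in_tree_sub gin // F2.
    by apply: hK; apply: F1 => //; rewrite E.
  + move=> u b' hu; rewrite hE /f.
    case E: (take k (rcons u b') == a).
    * have hs := take_eq_size (eqP E); rewrite size_rcons in hs.
      case: eqP => Hs.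
        have Ea : rcons u b' = a.
          by rewrite -(eqP E) take_oversize // Hs.
        move: (Ea); rewrite ha => /rcons_inj [Eu Eb]; subst u b'.
        have -> : (take k c == rcons c b) = false.
          apply/negP => /eqP Ec; have := congr1 size Ec.
          rewrite size_take /k ?ha !size_rcons ltnNge leqnSn /= => H.
          by move: H; elim: (size c) => // n IH [] /IH.
        by exists (g (drop k (rcons c b))); rewrite -catA cat_rcons.
      have hk : k <= size u.
        move: hs; rewrite leq_eqVlt => /orP [/eqP Ek | //].
        by exfalso; apply: Hs; rewrite size_rcons -Ek.
      have Eu : take k u == a by rewrite -cats1 takel_cat // in E.
      rewrite Eu drop_rcons //.
      have hP := F2 _ hu E; rewrite drop_rcons // in hP.
      have := gedge (drop k u) b' hP.
      case: (pat_edge P (rcons (drop k u) b')).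
        by move=> ->; rewrite !rcons_cat.
      by move=> [s ->]; exists s; rewrite !catA.
    * have -> : (take k u == a) = false.
        apply/negP => Eu; move: E.
        by rewrite -cats1 takel_cat ?Eu // take_eq_size // (eqP Eu).
      by rewrite rcons_cat.
Qed.

Lemma A_left P L R : contains L P -> contains (Node L R) P.
Proof.
move=> [f [fi [fin fe]]]; exists (fun u => false :: f u); split; [|split].
- by move=> u v hu hv [] /fi; apply.
- by move=> u /fin.
- move=> u b /fe; case: (pat_edge P _) => [-> // | [s ->]]; by exists s.
Qed.

Lemma A_right P L R : contains R P -> contains (Node L R) P.
Proof.
move=> [f [fi [fin fe]]]; exists (fun u => true :: f u); split; [|split].
- by move=> u v hu hv [] /fi; apply.
- by move=> u /fin.
- move=> u b /fe; case: (pat_edge P _) => [-> // | [s ->]]; by exists s.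
Qed.

Definition K0 := Node Leaf (Node (Node Leaf Leaf) Leaf).

Lemma K0_cond T x :
  (forall u, in_tree K0 u -> in_tree T (x ++ u)) <-> in_tree T (x ++ [:: true; false]).
Proof.
split; first by apply.
move=> h; rewrite /K0; case => [|[] [|[] [|[] ?]]] //= hK; try done.
- by apply: (@in_tree_prefix _ _ [:: true; false]); rewrite cats0.
- by apply: (@in_tree_prefix _ _ [:: false]); rewrite -catA.
Qed.

Lemma leaf_char P T : contains T (attach_leaf P) <->
  exists x, in_tree T (x ++ [:: true; false]) /\
            contains (sub T (x ++ [:: true; false; true])) P.
Proof.
have hf : forall u, in_tree (pat_tree (attach_leaf P)) u =
   in_tree K0 u || (take (size [:: true; false; true]) u == [:: true; false; true])
                   && in_tree (pat_tree P) (drop (size [:: true; false; true]) u).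
  move=> u; case: u => [|[] [|[] [|[] u]]] //=; by rewrite ?take0 ?drop0.
have [H1 H2] := @contains_graft P (attach_leaf P) K0 [:: true; false; true]
   [:: true; false] true T erefl erefl erefl hf (fun u => erefl).
split => [/H1 [x [h1 h2]] | [x [h1 h2]]].
  by exists x; split => //; apply/K0_cond.
by apply: H2; exists x; split => //; apply/K0_cond.
Qed.

Lemma mid_char P T : contains T (attach_mid P) <->
  exists x, in_tree T (x ++ [:: true; false]) /\
            contains (sub T (x ++ [:: true; true])) P.
Proof.
have hf : forall u, in_tree (pat_tree (attach_mid P)) u =
   in_tree K0 u || (take (size [:: true; true]) u == [:: true; true])
                   && in_tree (pat_tree P) (drop (size [:: true; true]) u).
  move=> u; case: u => [|[] [|[] [|[] u]]] //=; by rewrite ?take0 ?drop0 ?andbF.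
have [H1 H2] := @contains_graft P (attach_mid P) K0 [:: true; true]
   [:: true] true T erefl erefl erefl hf (fun u => erefl).
split => [/H1 [x [h1 h2]] | [x [h1 h2]]].
  by exists x; split => //; apply/K0_cond.
by apply: H2; exists x; split => //; apply/K0_cond.
Qed.

From mathcomp Require Import zify.

Lemma sub0 t : sub t [::] = t. Proof. by case: t. Qed.

Definition locQ P Y := match Y with Node (Node _ Z) _ => contains Z P | _ => False end.
Definition locQ' P Y := match Y with Node (Node _ _) R => contains R P | _ => False end.

Fixpoint CQ P T : Prop :=
  match T with Leaf => False | Node L R => CQ P L \/ CQ P R \/ locQ P R end.
Fixpoint CQ' P T : Prop :=
  match T with Leaf => False | Node L R => CQ' P L \/ CQ' P R \/ locQ' P R end.

Lemma CQ_char P T : (exists x, in_tree T (x ++ [:: true; false]) /\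
            contains (sub T (x ++ [:: true; false; true])) P) <-> CQ P T.
Proof.
elim: T => [|L IHL R IHR]; first by split => [[x []]|].
split.
- move=> [[|[] x] /= [h hA]].
  + by right; right; case: R {IHR} h hA => [|[|Z1 Z2] R2] //= _; rewrite sub0.
  + by right; left; apply/IHR; exists x.
  + by left; apply/IHL; exists x.
- move=> [/IHL [x h] | [/IHR [x h] | h]].
  + by exists (false :: x).
  + by exists (true :: x).
  + exists [::]; by case: R {IHR} h => [|[|Z1 Z2] R2] //=; rewrite sub0.
Qed.

Lemma CQ'_char P T : (exists x, in_tree T (x ++ [:: true; false]) /\
            contains (sub T (x ++ [:: true; true])) P) <-> CQ' P T.
Proof.
elim: T => [|L IHL R IHR]; first by split => [[x []]|].
split.
- move=> [[|[] x] /= [h hA]].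
  + by right; right; case: R {IHR} h hA => [|[|Z1 Z2] R2] //= _; rewrite sub0.
  + by right; left; apply/IHR; exists x.
  + by left; apply/IHL; exists x.
- move=> [/IHL [x h] | [/IHR [x h] | h]].
  + by exists (false :: x).
  + by exists (true :: x).
  + exists [::]; by case: R {IHR} h => [|[|Z1 Z2] R2] //=; rewrite sub0.
Qed.

Lemma locQ_A P T : locQ P T -> contains T P.
Proof. by case: T => [|[|Z1 Z2] R2] //= h; apply: A_left; apply: A_right. Qed.
Lemma locQ'_A P T : locQ' P T -> contains T P.
Proof. by case: T => [|[|Z1 Z2] R2] //= h; apply: A_right. Qed.

Lemma CQ_A P T : CQ P T -> contains T P.
Proof.
elim: T => [|L IHL R IHR] //= [/IHL h | [/IHR h | /locQ_A h]];
  by [apply: A_left | apply: A_right].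
Qed.
Lemma CQ'_A P T : CQ' P T -> contains T P.
Proof.
elim: T => [|L IHL R IHR] //= [/IHL h | [/IHR h | /locQ'_A h]];
  by [apply: A_left | apply: A_right].
Qed.

Fixpoint phi t := match t with Leaf => Leaf | Node l r => Node (phi l) (psi r) end
with psi t := match t with
  | Leaf => Leaf
  | Node Leaf r => Node Leaf (psi r)
  | Node (Node l1 l2) r => Node (Node (phi l1) (psi r)) l2 end.

Fixpoint phi' t := match t with Leaf => Leaf | Node a b => Node (phi' a) (psi' b) end
with psi' t := match t with
  | Leaf => Leaf
  | Node Leaf c => Node Leaf (psi' c)
  | Node (Node a b) c => Node (Node (phi' a) c) (psi' b) end.

Lemma bt_sind (Pr : btree -> Prop) :
  (forall T, (forall T', bsize T' < bsize T -> Pr T') -> Pr T) -> forall T, Pr T.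
Proof.
move=> H T; have [n] : exists n, bsize T < n by exists (bsize T).+1.
elim: n T => [|n IH] T // hT; apply: H => T' h; apply: IH.
by apply: leq_trans h _; rewrite -ltnS.
Qed.

Ltac szl := rewrite /=; lia.

Lemma phiK T : phi' (phi T) = T /\ psi' (psi T) = T.
Proof.
elim/bt_sind: T => T IH; case: T IH => [|L R] IH //=.
have [hL1 _] := IH L ltac:(szl).
have [_ hR2] := IH R ltac:(szl).
split; first by rewrite hL1 hR2.
case: L IH hL1 => [|L1 L2] IH hL1 /=; first by rewrite hR2.
have [h1 _] := IH L1 ltac:(szl).
by rewrite h1 hR2.
Qed.

Lemma phi'K T : phi (phi' T) = T /\ psi (psi' T) = T.
Proof.
elim/bt_sind: T => T IH; case: T IH => [|L R] IH //=.
have [hL1 _] := IH L ltac:(szl).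
have [_ hR2] := IH R ltac:(szl).
split; first by rewrite hL1 hR2.
case: L IH hL1 => [|L1 L2] IH hL1 /=; first by rewrite hR2.
have [h1 _] := IH L1 ltac:(szl).
have [_ h2] := IH L2 ltac:(szl).
by rewrite h1 h2.
Qed.

Lemma bsize_phi T : bsize (phi T) = bsize T /\ bsize (psi T) = bsize T.
Proof.
elim/bt_sind: T => T IH; case: T IH => [|L R] IH //=.
have [hL1 _] := IH L ltac:(szl).
have [_ hR2] := IH R ltac:(szl).
split; first by rewrite hL1 hR2.
case: L IH hL1 => [|L1 L2] IH hL1 /=; first by rewrite hR2.
have [h1 _] := IH L1 ltac:(szl).
rewrite h1 hR2; lia.
Qed.

Lemma bsize_phi' T : bsize (phi' T) = bsize T /\ bsize (psi' T) = bsize T.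
Proof.
elim/bt_sind: T => T IH; case: T IH => [|L R] IH //=.
have [hL1 _] := IH L ltac:(szl).
have [_ hR2] := IH R ltac:(szl).
split; first by rewrite hL1 hR2.
case: L IH hL1 => [|L1 L2] IH hL1 /=; first by rewrite hR2.
have [h1 _] := IH L1 ltac:(szl).
have [_ h2] := IH L2 ltac:(szl).
rewrite h1 h2; lia.
Qed.

Lemma key P T : (CQ P T <-> CQ' P (phi T)) /\
  (CQ P T \/ locQ P T <-> CQ' P (psi T) \/ locQ' P (psi T)).
Proof.
elim/bt_sind: T => T IH; case: T IH => [|L R] IH; first by simpl; tauto.
have [hL1 _] := IH L ltac:(szl).
have [_ hR2] := IH R ltac:(szl).
split; first by simpl; tauto.
case: L IH hL1 => [|L1 L2] IH hL1; first by simpl; tauto.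
have [h1 _] := IH L1 ltac:(szl).
have a1 := @CQ_A P L2; have a2 := @locQ_A P L2.
have a3 := @CQ'_A P L2; have a4 := @locQ'_A P L2.
simpl; simpl in h1; tauto.
Qed.

Lemma key2 P T : contains T (attach_leaf P) <-> contains (phi T) (attach_mid P).
Proof.
rewrite leaf_char mid_char CQ_char CQ'_char.
by have [-> _] := key P T.
Qed.


Lemma exist_eq (A : Type) (Pr : A -> Prop) (x y : A) (hx : Pr x) (hy : Pr y) :
  x = y -> exist Pr x hx = exist Pr y hy.
Proof. move=> E; subst y; f_equal; apply: proof_irrelevance. Qed.

Lemma key3 P T : contains T (attach_mid P) <-> contains (phi' T) (attach_leaf P).
Proof. by rewrite key2; have [-> _] := phi'K T. Qed.

Definition fmap P n (X : avoiders (attach_leaf P) n) : avoiders (attach_mid P) n.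
Proof.
case: X => T [h1 h2]; exists (phi T); split.
  by have [-> _] := bsize_phi T.
by rewrite -key2.
Defined.

Definition gmap P n (X : avoiders (attach_mid P) n) : avoiders (attach_leaf P) n.
Proof.
case: X => T [h1 h2]; exists (phi' T); split.
  by have [-> _] := bsize_phi' T.
by rewrite -key3.
Defined.

Theorem lemma21 (P : pattern) (hP : pat_tree P <> Leaf) :
  wilf_equiv (attach_leaf P) (attach_mid P).
Proof.
move=> n; exists (@fmap P n); exists (@gmap P n).
- case=> T [h1 h2]; apply: exist_eq; by have [-> _] := phiK T.
- case=> T [h1 h2]; apply: exist_eq; by have [-> _] := phi'K T.
Qed.
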